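(* Consider problem $\mathbf{P4}$ (defined in the context) with $E_{max}>0$. Let $A_1=\sum_{i=1}^M\gamma_i$, $A_2=\sum_{j=1}^N\theta_j$, $a=\sum_{i=1}^M\eta_iP_Bh_{1,i}$, $f(x)=x\ln x-x+1$, let $x^*>1$ solve $f(x^* )=A_1$ and, when $A_1\ge \frac{a}{N}A_2$, let $x_1^*>1$ solve $f(x_1^* )=A_1-\frac aNA_2$. Write $L=\frac{a(x_1^*-1)}{A_1+x_1^*-1}$, $U=\frac{N}{A_2}(x_1^*-1)$, $D=N(x_1^*-1+A_1)-aA_2$. Then an optimal solution of $\mathbf{P4}$ is, for $i=1,\dots,M$, $j=1,\dots,N$: (i) if $A_1\ge\frac aNA_2$ and $E_{max}\le L$: $\tau_0^*=\min\left[\frac{x^*-1}{A_1+x^*-1},\frac{E_{max}}{a}\right]$, $\tau_{1,i}^*=\max\left[\frac{\gamma_i}{A_1+x^*-1},\frac{\gamma_i}{A_1}\left(1-\frac{E_{max}}{a}\right)\right]$, $\tau_{2,j}^*=0$, $\bar E^*=0$; (ii) if $A_1\ge\frac aNA_2$ and $L\le E_{max}\le U$: $\tau_0^*=\frac{N(x_1^*-1)-E_{max}A_2}{D}$, $\tau_{1,i}^*=\frac{\gamma_i\left(N(x_1^*-1)-E_{max}A_2\right)}{(x_1^*-1)D}$, $\tau_{2,j}^*=\frac{\theta_j\left(E_{max}(x_1^*-1+A_1)-a(x_1^*-1)\right)}{(x_1^*-1)D}$, $\bar E^*=\frac{E_{max}(x_1^*-1+A_1)-a(x_1^*-1)}{D}$;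 (iii) if ($A_1\ge\frac aNA_2$ and $E_{max}\ge U$) or $A_1<\frac aNA_2$: $\tau_0^*=0$, $\tau_{1,i}^*=0$, $\tau_{2,j}^*=\theta_j/A_2$, $\bar E^*=E_{max}/N$.
   Context: Integers $M,N\ge 1$; positive constants $P_B$, $\Gamma$, $\sigma^2$, $E_{max}$; for $i=1,\dots,M$ constants $\eta_i\in(0,1)$, $h_{1,i}>0$, $g_{1,i}>0$; for $j=1,\dots,N$ constants $g_{2,j}>0$. Define $\gamma_i=\eta_ih_{1,i}g_{1,i}P_B/(\Gamma\sigma^2)$ and $\theta_j=g_{2,j}/(\Gamma\sigma^2)$. For $\tau>0$ let $R_{1,i}(\tau_0,\tau)=\tau\log_2(1+\gamma_i\tau_0/\tau)$ and $R_{2,j}(\bar E,\tau)=\tau\log_2(1+\theta_j\bar E/\tau)$, with both set to $0$ when $\tau=0$. Problem $\mathbf{P4}$: maximize $\sum_{i=1}^MR_{1,i}(\tau_0,\tau_{1,i})+\sum_{j=1}^NR_{2,j}(\bar E,\tau_{2,j})$ over $\tau_0,\tau_{1,1},\dots,\tau_{1,M},\tau_{2,1},\dots,\tau_{2,N}\ge0$ and $\bar E\ge 0$, subject to $\tau_0+\sum_{i=1}^M\tau_{1,i}+\sum_{j=1}^N\tau_{2,j}\le 1$ and $a\tau_0+N\bar E\le E_{max}$, where $a=\sum_{i=1}^M\eta_iP_Bh_{1,i}$. *)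

(* Defs.v *)
From Stdlib Require Import Reals Lra.
Open Scope R_scope.

(* sum_{k=0}^{n-1} f k  (indices shifted: paper's i=1..M is k=0..M-1) *)
Fixpoint rsum (n : nat) (f : nat -> R) : R :=
  match n with
  | O => 0
  | S n' => rsum n' f + f n'
  end.

Definition log2 (x : R) : R := ln x / ln 2.

Definition rate (c y tau : R) : R :=
  if Req_EM_T tau 0 then 0 else tau * log2 (1 + c * y / tau).

Definition gam (PB Gam s2 : R) (eta h1 g1 : nat -> R) (i : nat) : R :=
  eta i * h1 i * g1 i * PB / (Gam * s2).

Definition theta (Gam s2 : R) (g2 : nat -> R) (j : nat) : R :=
  g2 j / (Gam * s2).

Definition acoef (M : nat) (PB : R) (eta h1 : nat -> R) : R :=
  rsum M (fun i => eta i * PB * h1 i).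

Definition P4obj (M N : nat) (PB Gam s2 : R) (eta h1 g1 g2 : nat -> R)
  (t0 : R) (t1 t2 : nat -> R) (E : R) : R :=
  rsum M (fun i => rate (gam PB Gam s2 eta h1 g1 i) t0 (t1 i))
  + rsum N (fun j => rate (theta Gam s2 g2 j) E (t2 j)).

Definition P4feas (M N : nat) (PB Emax : R) (eta h1 : nat -> R)
  (t0 : R) (t1 t2 : nat -> R) (E : R) : Prop :=
  0 <= t0 /\ (forall i, (i < M)%nat -> 0 <= t1 i)
  /\ (forall j, (j < N)%nat -> 0 <= t2 j) /\ 0 <= E
  /\ t0 + rsum M t1 + rsum N t2 <= 1
  /\ acoef M PB eta h1 * t0 + INR N * E <= Emax.

Definition P4opt (M N : nat) (PB Gam s2 Emax : R) (eta h1 g1 g2 : nat -> R)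
  (t0 : R) (t1 t2 : nat -> R) (E : R) : Prop :=
  P4feas M N PB Emax eta h1 t0 t1 t2 E /\
  forall t0' t1' t2' E', P4feas M N PB Emax eta h1 t0' t1' t2' E' ->
    P4obj M N PB Gam s2 eta h1 g1 g2 t0' t1' t2' E'
    <= P4obj M N PB Gam s2 eta h1 g1 g2 t0 t1 t2 E.

Definition fx (x : R) : R := x * ln x - x + 1.

(* Main.v *)
Require Import Defs.
From Stdlib Require Import Reals Lra Lia.
Open Scope R_scope.

Lemma rsum_ext n f g : (forall i, (i < n)%nat -> f i = g i) -> rsum n f = rsum n g.
Proof. induction n; simpl; intros H; auto. rewrite IHn by (intros; apply H; lia). rewrite H by lia. auto. Qed.

Lemma rsum_le n f g : (forall i, (i < n)%nat -> f i <= g i) -> rsum n f <= rsum n g.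
Proof. induction n; simpl; intros H; [lra|]. assert (H1:=H n ltac:(lia)). assert (rsum n f <= rsum n g) by (apply IHn; intros; apply H; lia). lra. Qed.

Lemma rsum_lin n p q f g : rsum n (fun i => p * f i + q * g i) = p * rsum n f + q * rsum n g.
Proof. induction n; simpl; [ring|]. rewrite IHn; ring. Qed.

Lemma rsum_scal n p f : rsum n (fun i => p * f i) = p * rsum n f.
Proof. induction n; simpl; [ring|]. rewrite IHn; ring. Qed.

Lemma rsum_0 n : rsum n (fun _ => 0) = 0.
Proof. induction n; simpl; [ring|]. rewrite IHn; ring. Qed.

Lemma rsum_pos n f : (1 <= n)%nat -> (forall i, (i < n)%nat -> 0 < f i) -> 0 < rsum n f.
Proof. induction n; intros Hn H; [lia|]. simpl. destruct n.
 - simpl. assert (H1:=H 0%nat ltac:(lia)). lra.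
 - assert (0 < rsum (S n) f) by (apply IHn; [lia| intros; apply H; lia]).
   assert (H1:=H (S n) ltac:(lia)). lra. Qed.

Lemma rsum_nonneg n f : (forall i, (i < n)%nat -> 0 <= f i) -> 0 <= rsum n f.
Proof. intros H. rewrite <- (rsum_0 n). apply rsum_le. auto. Qed.

Lemma ln_le_x1 x : 0 < x -> ln x <= x - 1.
Proof. intros. pose proof (exp_ineq1_le (ln x)). rewrite exp_ln in H0 by auto. lra. Qed.

Lemma ln_div p q : 0 < p -> 0 < q -> ln (p / q) = ln p - ln q.
Proof. intros. unfold Rdiv. rewrite ln_mult, ln_Rinv; try ring; auto. apply Rinv_0_lt_compat; auto. Qed.

Lemma ln_tangent p q : 0 < p -> 0 < q -> ln p <= ln q + (p - q) / q.
Proof. intros. pose proof (ln_le_x1 (p/q)). rewrite ln_div in H1 by auto.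
 assert (p/q - 1 = (p-q)/q) by (field; lra). 
 assert (0 < p/q) by (apply Rdiv_lt_0_compat; auto). lra. Qed.

Lemma ln2_pos : 0 < ln 2.
Proof. pose proof ln_lt_2. lra. Qed.

Lemma alpha_nonneg w : 0 <= w -> 0 <= ln (1 + w) - w / (1 + w).
Proof. intros. pose proof (ln_tangent 1 (1+w) ltac:(lra) ltac:(lra)). rewrite ln_1 in H0.
 assert ((1 - (1+w))/(1+w) = - (w/(1+w))) by (field; lra). lra. Qed.

Lemma rate_bound c y t w : 0 < c -> 0 <= y -> 0 <= t -> 0 <= w ->
  rate c y t <= (t * (ln (1 + w) - w / (1 + w)) + c * y / (1 + w)) / ln 2.
Proof. intros Hc Hy Ht Hw. pose proof ln2_pos. unfold rate, log2.
 destruct (Req_EM_T t 0) as [e|ne].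
 - subst. apply Rmult_le_pos; [| left; apply Rinv_0_lt_compat; auto].
   rewrite Rmult_0_l, Rplus_0_l. apply Rmult_le_pos; [nra|left; apply Rinv_0_lt_compat; lra].
 - assert (Htp : 0 < t) by lra.
   assert (0 <= c * y / t) by (apply Rmult_le_pos; [nra|left; apply Rinv_0_lt_compat; lra]).
   pose proof (ln_tangent (1 + c*y/t) (1+w) ltac:(lra) ltac:(lra)).
   replace (t * (ln (1 + c*y/t) / ln 2)) with ((t * ln (1 + c*y/t)) / ln 2) by (field; lra).
   unfold Rdiv at 1 4. apply Rmult_le_compat_r; [left; apply Rinv_0_lt_compat; auto|].
   fold (c*y/t). fold (c*y/(1+w)).
   assert (t * ((1 + c*y/t - (1+w))/(1+w)) = c*y/(1+w) - t * (w/(1+w))) by (field; lra).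
   assert (t * ln (1 + c * y / t) <= t * (ln (1+w) + (1 + c*y/t - (1+w))/(1+w))) by
     (apply Rmult_le_compat_l; lra). lra. Qed.

Lemma rate_eval c y s w : 0 < c -> 0 <= s -> y = s * w ->
  rate c y (c * s) = c * s * log2 (1 + w).
Proof. intros Hc Hs Hy. unfold rate. destruct (Req_EM_T (c*s) 0) as [e|ne].
 - rewrite e. ring.
 - f_equal. f_equal. f_equal. subst y. field. split; [|lra]. intro H0. apply ne. rewrite H0; ring. Qed.

Lemma fx_mono u v : 0 < u -> 0 < v -> (v - u) * ln u <= fx v - fx u.
Proof. intros. unfold fx. pose proof (ln_tangent u v H H0).
 assert (v * ln u <= v * (ln v + (u - v)/v)) by (apply Rmult_le_compat_l; lra).
 assert (v * ((u-v)/v) = u - v) by (field; lra). nra. Qed.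

Definition alp (w : R) := ln (1 + w) - w / (1 + w).

Lemma kkt M N PB Gam s2 Emax eta h1 g1 g2
  (hga : forall i, (i < M)%nat -> 0 < gam PB Gam s2 eta h1 g1 i)
  (hth : forall j, (j < N)%nat -> 0 < theta Gam s2 g2 j)
  w1 w2 lam mu :
  0 <= w1 -> 0 <= w2 -> 0 <= lam -> 0 <= mu ->
  alp w1 <= lam -> alp w2 <= lam ->
  rsum M (gam PB Gam s2 eta h1 g1) / (1 + w1) <= lam + acoef M PB eta h1 * mu ->
  rsum N (theta Gam s2 g2) / (1 + w2) <= INR N * mu ->
  forall t0 t1 t2 E, P4feas M N PB Emax eta h1 t0 t1 t2 E ->
  P4obj M N PB Gam s2 eta h1 g1 g2 t0 t1 t2 E <= (lam + mu * Emax) / ln 2.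
Proof.
  intros Hw1 Hw2 Hl Hm H1 H2 H3 H4 t0 t1 t2 E (Ht0 & Ht1 & Ht2 & HE & Hti & Hen).
  pose proof ln2_pos as Hl2.
  unfold P4obj.
  set (A1 := rsum M (gam PB Gam s2 eta h1 g1)) in *.
  set (A2 := rsum N (theta Gam s2 g2)) in *.
  set (a := acoef M PB eta h1) in *.
  assert (B1 : rsum M (fun i => rate (gam PB Gam s2 eta h1 g1 i) t0 (t1 i))
     <= rsum M (fun i => (alp w1 / ln 2) * t1 i + (t0 / ((1 + w1) * ln 2)) * gam PB Gam s2 eta h1 g1 i)).
  { apply rsum_le. intros i Hi. eapply Rle_trans. apply (rate_bound _ _ _ w1); auto.
    right. unfold alp. field. split; lra. }
  assert (B2 : rsum N (fun j => rate (theta Gam s2 g2 j) E (t2 j))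
     <= rsum N (fun j => (alp w2 / ln 2) * t2 j + (E / ((1 + w2) * ln 2)) * theta Gam s2 g2 j)).
  { apply rsum_le. intros i Hi. eapply Rle_trans. apply (rate_bound _ _ _ w2); auto.
    right. unfold alp. field. split; lra. }
  rewrite rsum_lin in B1, B2. fold A1 in B1. fold A2 in B2.
  set (T1 := rsum M t1) in *. set (T2 := rsum N t2) in *.
  assert (0 <= T1) by (apply rsum_nonneg; auto).
  assert (0 <= T2) by (apply rsum_nonneg; auto).
  assert (K : alp w1 * T1 + A1 / (1 + w1) * t0 + alp w2 * T2 + A2 / (1 + w2) * E
     <= lam + mu * Emax).
  { assert (alp w1 * T1 <= lam * T1) by (apply Rmult_le_compat_r; auto).
    assert (alp w2 * T2 <= lam * T2) by (apply Rmult_le_compat_r; auto).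
    assert (A1 / (1 + w1) * t0 <= (lam + a * mu) * t0) by (apply Rmult_le_compat_r; auto).
    assert (A2 / (1 + w2) * E <= (INR N * mu) * E) by (apply Rmult_le_compat_r; auto).
    assert (lam * (t0 + T1 + T2) <= lam * 1) by (apply Rmult_le_compat_l; auto).
    assert (mu * (a * t0 + INR N * E) <= mu * Emax) by (apply Rmult_le_compat_l; auto).
    nra. }
  assert (Eq : alp w1 / ln 2 * T1 + t0 / ((1 + w1) * ln 2) * A1 +
      (alp w2 / ln 2 * T2 + E / ((1 + w2) * ln 2) * A2)
      = (alp w1 * T1 + A1 / (1 + w1) * t0 + alp w2 * T2 + A2 / (1 + w2) * E) / ln 2)
    by (field; split; lra).
  assert ((alp w1 * T1 + A1 / (1 + w1) * t0 + alp w2 * T2 + A2 / (1 + w2) * E) / ln 2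
      <= (lam + mu * Emax) / ln 2).
  { unfold Rdiv at 1 2. apply Rmult_le_compat_r; auto. left; apply Rinv_0_lt_compat; auto. }
  lra.
Qed.

Lemma div_nonneg p q : 0 <= p -> 0 < q -> 0 <= p / q.
Proof. intros. apply Rmult_le_pos; auto. left; apply Rinv_0_lt_compat; auto. Qed.

Lemma rate00 c : rate c 0 0 = 0.
Proof. unfold rate. destruct (Req_EM_T 0 0); [reflexivity| lra]. Qed.

Theorem theorem4 (M N : nat) (PB Gam s2 Emax : R) (eta h1 g1 g2 : nat -> R)
  (hM : (1 <= M)%nat) (hN : (1 <= N)%nat)
  (hPB : 0 < PB) (hGam : 0 < Gam) (hs2 : 0 < s2) (hE : 0 < Emax)
  (heta : forall i, (i < M)%nat -> 0 < eta i < 1)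
  (hh1 : forall i, (i < M)%nat -> 0 < h1 i)
  (hg1 : forall i, (i < M)%nat -> 0 < g1 i)
  (hg2 : forall j, (j < N)%nat -> 0 < g2 j) :
  let A1 := rsum M (gam PB Gam s2 eta h1 g1) in
  let A2 := rsum N (theta Gam s2 g2) in
  let a := acoef M PB eta h1 in
  let Nr := INR N in
  forall xs x1s : R,
  1 < xs -> fx xs = A1 ->
  let L := a * (x1s - 1) / (A1 + x1s - 1) in
  let U := Nr / A2 * (x1s - 1) in
  let D := Nr * (x1s - 1 + A1) - a * A2 in
  let Hx1 := (a / Nr * A2 <= A1 /\ 1 < x1s /\ fx x1s = A1 - a / Nr * A2) in
  (* case (i) *)
  (Hx1 -> Emax <= L ->
     P4opt M N PB Gam s2 Emax eta h1 g1 g2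
       (Rmin ((xs - 1) / (A1 + xs - 1)) (Emax / a))
       (fun i => Rmax (gam PB Gam s2 eta h1 g1 i / (A1 + xs - 1))
                      (gam PB Gam s2 eta h1 g1 i / A1 * (1 - Emax / a)))
       (fun _ => 0) 0)
  /\
  (* case (ii) *)
  (Hx1 -> L <= Emax -> Emax <= U ->
     P4opt M N PB Gam s2 Emax eta h1 g1 g2
       ((Nr * (x1s - 1) - Emax * A2) / D)
       (fun i => gam PB Gam s2 eta h1 g1 i * (Nr * (x1s - 1) - Emax * A2)
                 / ((x1s - 1) * D))
       (fun j => theta Gam s2 g2 j * (Emax * (x1s - 1 + A1) - a * (x1s - 1))
                 / ((x1s - 1) * D))
       ((Emax * (x1s - 1 + A1) - a * (x1s - 1)) / D))
  /\
  (* case (iii) *)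
  ((Hx1 /\ U <= Emax) \/ A1 < a / Nr * A2 ->
     P4opt M N PB Gam s2 Emax eta h1 g1 g2
       0 (fun _ => 0) (fun j => theta Gam s2 g2 j / A2) (Emax / Nr)).
Proof.
  intros A1 A2 a Nr xs x1s Hxs Hfx L U D Hx1.
  assert (hga : forall i, (i < M)%nat -> 0 < gam PB Gam s2 eta h1 g1 i).
  { intros i Hi. unfold gam. destruct (heta i Hi). specialize (hh1 i Hi). specialize (hg1 i Hi).
    apply Rdiv_lt_0_compat; repeat apply Rmult_lt_0_compat; auto. }
  assert (hth : forall j, (j < N)%nat -> 0 < theta Gam s2 g2 j).
  { intros j Hj. unfold theta. apply Rdiv_lt_0_compat; auto. apply Rmult_lt_0_compat; auto. }
  assert (hA1 : 0 < A1) by (apply rsum_pos; auto).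
  assert (hA2 : 0 < A2) by (apply rsum_pos; auto).
  assert (ha : 0 < a).
  { apply rsum_pos; auto. intros i Hi. destruct (heta i Hi). specialize (hh1 i Hi).
    repeat apply Rmult_lt_0_compat; auto. }
  assert (hNr : 0 < Nr) by (apply lt_0_INR; lia).
  pose proof ln2_pos as Hl2.
  assert (eA1 : rsum M (gam PB Gam s2 eta h1 g1) = A1) by reflexivity.
  assert (eA2 : rsum N (theta Gam s2 g2) = A2) by reflexivity.
  assert (ea : acoef M PB eta h1 = a) by reflexivity.
  assert (eNr : INR N = Nr) by reflexivity.
  assert (eL : L = a * (x1s - 1) / (A1 + x1s - 1)) by reflexivity.
  assert (eU : U = Nr / A2 * (x1s - 1)) by reflexivity.
  assert (eD : D = Nr * (x1s - 1 + A1) - a * A2) by reflexivity.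
  unfold Hx1. clearbody D U L Nr a A2 A1. clear Hx1.
  set (c := a / Nr * A2).
  assert (ec : c * Nr = a * A2) by (unfold c; field; lra).
  assert (ec' : c = a * A2 / Nr) by (unfold c; field; lra).
  assert (hc : 0 < c) by (unfold c; apply Rmult_lt_0_compat; auto; apply Rdiv_lt_0_compat; auto).
  clearbody c.
  split; [|split].
  -
    intros [Hc1 [Hx1s Hfx1]] HL.
    assert (Hlxs : 0 < ln xs) by (rewrite <- ln_1; apply ln_increasing; lra).
    assert (Hxx : x1s < xs).
    { pose proof (fx_mono xs x1s ltac:(lra) ltac:(lra)). nra. }
    set (e := Emax / a).
    assert (he : 0 < e) by (unfold e; apply Rdiv_lt_0_compat; auto).
    assert (eE : Emax = e * a) by (unfold e; field; lra).
    clearbody e. subst Emax.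
    assert (He1 : e * (A1 + x1s - 1) <= x1s - 1).
    { rewrite eL in HL. apply (Rmult_le_compat_r ((A1 + x1s - 1) / a)) in HL;
        [|apply div_nonneg; lra].
      replace (e * a * ((A1 + x1s - 1) / a)) with (e * (A1 + x1s - 1)) in HL by (field; lra).
      replace (a * (x1s - 1) / (A1 + x1s - 1) * ((A1 + x1s - 1) / a)) with (x1s - 1) in HL
        by (field; lra). lra. }
    assert (he1 : e < 1) by nra.
    assert (He2 : e * (A1 + xs - 1) <= xs - 1) by nra.
    rewrite Rmin_right.
    2:{ apply (Rmult_le_reg_r (A1 + xs - 1)); [lra|].
        replace ((xs - 1) / (A1 + xs - 1) * (A1 + xs - 1)) with (xs - 1) by (field; lra).
        replace (e * a / a) with e by (field; lra). lra. }
    replace (e * a / a) with e by (field; lra).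
    assert (Et1 : forall i, (i < M)%nat ->
       Rmax (gam PB Gam s2 eta h1 g1 i / (A1 + xs - 1)) (gam PB Gam s2 eta h1 g1 i / A1 * (1 - e))
       = gam PB Gam s2 eta h1 g1 i * ((1 - e) / A1)).
    { intros i Hi. pose proof (hga i Hi). rewrite Rmax_right.
      - field; lra.
      - assert (gam PB Gam s2 eta h1 g1 i / A1 * (1 - e) - gam PB Gam s2 eta h1 g1 i / (A1 + xs - 1)
          = gam PB Gam s2 eta h1 g1 i * ((1 - e) * (A1 + xs - 1) - A1) / (A1 * (A1 + xs - 1)))
          by (field; lra).
        assert (0 <= gam PB Gam s2 eta h1 g1 i * ((1 - e) * (A1 + xs - 1) - A1) / (A1 * (A1 + xs - 1))).
        { apply div_nonneg; [|nra]. apply Rmult_le_pos; nra. }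
        lra. }
    set (w := A1 * e / (1 - e)).
    assert (ew : w * (1 - e) = A1 * e) by (unfold w; field; lra).
    assert (hw : 0 <= w) by (unfold w; apply div_nonneg; nra).
    assert (Hw : w <= x1s - 1) by nra.
    clearbody w.
    set (l := ln (1 + w)).
    assert (hl : w / (1 + w) <= l) by (pose proof (alpha_nonneg w hw); unfold l; lra).
    assert (hl0 : 0 <= l) by (pose proof (div_nonneg w (1+w) hw ltac:(lra)); lra).
    assert (HF : (1 + w) * l - w <= A1 - c).
    { pose proof (fx_mono (1+w) x1s ltac:(lra) ltac:(lra)). unfold fx at 2 in H.
      fold l in H. rewrite Hfx1 in H. nra. }
    set (lam := alp w). set (mu := (A1 / (1 + w) - alp w) / a).
    assert (emu : mu = (A1 - ((1 + w) * l - w)) / (a * (1 + w))) by (unfold mu, alp; fold l; field; lra).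
    assert (hlam : 0 <= lam) by (apply alpha_nonneg; lra).
    assert (hmu : 0 <= mu) by (rewrite emu; apply div_nonneg; nra).
    split.
    + unfold P4feas. rewrite ea, eNr. repeat split; intros; try lra.
      * rewrite Et1 by auto. pose proof (hga i H). apply Rmult_le_pos; [lra|apply div_nonneg; lra].
      * rewrite rsum_0. rewrite (rsum_ext _ _ (fun i => ((1 - e) / A1) * gam PB Gam s2 eta h1 g1 i)).
        2:{ intros; rewrite Et1 by auto; ring. }
        rewrite rsum_scal, eA1. field_simplify; lra.
    + intros t0 t1 t2 E HF'.
      eapply Rle_trans.
      { apply (kkt M N PB Gam s2 (e * a) eta h1 g1 g2 hga hth w w lam mu); try lra; try (unfold lam; lra).
        - rewrite eA1, ea. unfold mu, lam. right; field; lra.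
        - rewrite eA2, eNr.
          assert (Nr * mu - A2 / (1 + w) = Nr * (A1 - ((1 + w) * l - w) - c) / (a * (1 + w)))
            by (rewrite emu, ec'; field; lra).
          assert (0 <= Nr * (A1 - ((1 + w) * l - w) - c) / (a * (1 + w))) by (apply div_nonneg; nra).
          lra.
        - exact HF'. }
      right. unfold P4obj. rewrite (rsum_ext N _ (fun _ => 0)) by (intros; apply rate00).
        rewrite rsum_0.
        rewrite (rsum_ext _ _ (fun i => ((1 - e) / A1 * log2 (1 + w)) * gam PB Gam s2 eta h1 g1 i)).
        2:{ intros i Hi. rewrite Et1 by auto. rewrite (rate_eval _ _ ((1 - e) / A1) w); auto.
            ring. apply div_nonneg; lra. apply (Rmult_eq_reg_r A1); [|lra].
            replace ((1 - e) / A1 * w * A1) with (w * (1 - e)) by (field; lra). lra. }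
        rewrite rsum_scal, eA1. unfold lam, mu, alp, log2. fold l.
        apply (Rmult_eq_reg_r (ln 2)); [|lra].
        replace (((1 - e) / A1 * (l / ln 2) * A1 + 0) * ln 2) with ((1 - e) * l) by (field; lra).
        replace ((l - w / (1 + w) + (A1 / (1 + w) - (l - w / (1 + w))) / a * (e * a)) / ln 2 * ln 2)
          with (l - w / (1 + w) + (A1 / (1 + w) - (l - w / (1 + w))) * e) by (field; lra).
        apply (Rmult_eq_reg_r (1 + w)); [|lra].
        replace ((l - w / (1 + w) + (A1 / (1 + w) - (l - w / (1 + w))) * e) * (1 + w))
          with ((1+w)*l*(1-e) - w*(1-e) + A1*e) by (field; lra). nra.
  -
    intros [Hc1 [Hx1s Hfx1]] HL HU.
    set (w := x1s - 1) in *.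
    assert (hw : 0 < w) by (unfold w; lra).
    assert (ex : x1s = 1 + w) by (unfold w; ring).
    clearbody w. subst x1s.
    set (l := ln (1 + w)).
    assert (Hl : (1 + w) * l - w = A1 - c).
    { rewrite <- Hfx1. unfold fx, l. ring. }
    assert (eD' : D = Nr * ((1 + w) * l)).
    { rewrite eD. replace (w + A1) with ((1 + w) * l + c) by lra.
      rewrite ec'. field. lra. }
    assert (hD : 0 < D) by (rewrite eD'; nra).
    assert (hl : 0 < l) by nra.
    replace (1 + w - 1) with w by ring.
    set (P := Nr * w - Emax * A2).
    set (K := Emax * (w + A1) - a * w).
    assert (hP : 0 <= P).
    { unfold P. rewrite eU in HU. replace (1 + w - 1) with w in HU by ring.
      apply (Rmult_le_compat_r A2) in HU; [|lra].
      replace (Nr / A2 * w * A2) with (Nr * w) in HU by (field; lra). lra. }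
    assert (hK : 0 <= K).
    { unfold K. rewrite eL in HL. replace (A1 + (1 + w) - 1) with (w + A1) in HL by ring.
      replace (1 + w - 1) with w in HL by ring.
      apply (Rmult_le_compat_r (w + A1)) in HL; [|lra].
      replace (a * w / (w + A1) * (w + A1)) with (a * w) in HL by (field; lra). lra. }
    assert (num : P * w + A1 * P + A2 * K = w * D) by (unfold P, K; rewrite eD; ring).
    assert (enr : a * P + Nr * K = Emax * D) by (unfold P, K; rewrite eD; ring).
    assert (eP : P = Nr * w - Emax * A2) by reflexivity.
    clearbody P K.
    assert (Et1 : forall i, (i < M)%nat ->
       gam PB Gam s2 eta h1 g1 i * P / (w * D) = gam PB Gam s2 eta h1 g1 i * (P / (w * D)))
       by (intros; field; lra).
    assert (Et2 : forall j, (j < N)%nat ->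
       theta Gam s2 g2 j * K / (w * D) = theta Gam s2 g2 j * (K / (w * D)))
       by (intros; field; lra).
    assert (hs1 : 0 <= P / (w * D)) by (apply div_nonneg; nra).
    assert (hs2' : 0 <= K / (w * D)) by (apply div_nonneg; nra).
    assert (ST1 : rsum M (fun i => gam PB Gam s2 eta h1 g1 i * P / (w * D)) = A1 * (P / (w * D))).
    { rewrite (rsum_ext _ _ (fun i => (P / (w * D)) * gam PB Gam s2 eta h1 g1 i)).
      - rewrite rsum_scal, eA1; ring.
      - intros; rewrite Et1 by auto; ring. }
    assert (ST2 : rsum N (fun j => theta Gam s2 g2 j * K / (w * D)) = A2 * (K / (w * D))).
    { rewrite (rsum_ext _ _ (fun j => (K / (w * D)) * theta Gam s2 g2 j)).
      - rewrite rsum_scal, eA2; ring.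
      - intros; rewrite Et2 by auto; ring. }
    assert (Tsum : P / D + A1 * (P / (w * D)) + A2 * (K / (w * D)) = 1).
    { replace (P / D + A1 * (P / (w * D)) + A2 * (K / (w * D)))
        with ((P * w + A1 * P + A2 * K) / (w * D)) by (field; lra).
      rewrite num. field; lra. }
    set (lam := alp w). set (mu := A2 / (Nr * (1 + w))).
    assert (hlam : 0 <= lam) by (apply alpha_nonneg; lra).
    assert (hmu : 0 <= mu) by (unfold mu; apply div_nonneg; nra).
    split.
    + unfold P4feas. rewrite ea, eNr. repeat split; intros; try lra.
      * apply div_nonneg; lra.
      * rewrite Et1 by auto. pose proof (hga i H). nra.
      * rewrite Et2 by auto. pose proof (hth j H). nra.
      * apply div_nonneg; lra.
      * right. replace (a * (P / D) + Nr * (K / D)) with ((a * P + Nr * K) / D) by (field; lra).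
        rewrite enr. field; lra.
    + intros t0 t1 t2 E HF'.
      eapply Rle_trans.
      { apply (kkt M N PB Gam s2 Emax eta h1 g1 g2 hga hth w w lam mu); try lra; try (unfold lam; lra).
        - rewrite eA1, ea.
          assert (lam + a * mu - A1 / (1 + w) = ((1 + w) * l - w + c - A1) / (1 + w))
            by (unfold lam, mu, alp; fold l; rewrite ec'; field; split; lra).
          assert (((1 + w) * l - w + c - A1) / (1 + w) = 0) by (rewrite Hl; field; lra).
          lra.
        - rewrite eA2, eNr. unfold mu. right; field; lra.
        - exact HF'. }
      right. unfold P4obj.
      rewrite (rsum_ext M _ (fun i => (P / (w * D) * log2 (1 + w)) * gam PB Gam s2 eta h1 g1 i)).
      2:{ intros i Hi. rewrite Et1 by auto. rewrite (rate_eval _ _ (P / (w * D)) w); auto.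
          ring. field; lra. }
      rewrite (rsum_ext N _ (fun j => (K / (w * D) * log2 (1 + w)) * theta Gam s2 g2 j)).
      2:{ intros j Hj. rewrite Et2 by auto. rewrite (rate_eval _ _ (K / (w * D)) w); auto.
          ring. field; lra. }
      rewrite !rsum_scal, eA1, eA2. unfold log2. fold l.
      replace (P / (w * D) * (l / ln 2) * A1 + K / (w * D) * (l / ln 2) * A2)
        with ((A1 * (P / (w * D)) + A2 * (K / (w * D))) * l / ln 2) by (field; lra).
      replace (A1 * (P / (w * D)) + A2 * (K / (w * D))) with (1 - P / D) by lra.
      assert (HH : (1 - P / D) * l = lam + mu * Emax).
      { rewrite eP, eD'. unfold lam, mu, alp. fold l. field. repeat split; lra. }
      rewrite HH. reflexivity.
  -
    intros Hcase.
    set (u := A2 * Emax / Nr).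
    assert (hu : 0 < u) by (unfold u; apply Rdiv_lt_0_compat; auto; apply Rmult_lt_0_compat; auto).
    assert (HF : A1 - c <= fx (1 + u)).
    { destruct Hcase as [[[Hc1 [Hx1s Hfx1]] HU] | Hlt].
      - rewrite <- Hfx1. assert (x1s <= 1 + u).
        { unfold u. rewrite eU in HU. 
          apply (Rmult_le_compat_r (A2 / Nr)) in HU; [|left; apply Rdiv_lt_0_compat; auto].
          replace (Nr / A2 * (x1s - 1) * (A2 / Nr)) with (x1s - 1) in HU by (field; lra).
          replace (Emax * (A2 / Nr)) with (A2 * Emax / Nr) in HU by (field; lra). lra. }
        pose proof (fx_mono x1s (1+u) ltac:(lra) ltac:(lra)).
        assert (0 < ln x1s) by (rewrite <- ln_1; apply ln_increasing; lra). nra.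
      - pose proof (fx_mono 1 (1+u) ltac:(lra) ltac:(lra)). rewrite ln_1 in H.
        unfold fx at 2 in H. rewrite ln_1 in H. lra. }
    set (lam := alp u). set (mu := A2 / (Nr * (1 + u))).
    assert (hlam : 0 <= lam) by (apply alpha_nonneg; lra).
    assert (hmu : 0 <= mu) by (left; unfold mu; apply Rdiv_lt_0_compat; auto; apply Rmult_lt_0_compat; lra).
    split.
    + unfold P4feas. rewrite ea, eNr. repeat split; intros; try lra.
      * left; apply Rdiv_lt_0_compat; auto.
      * left; apply Rdiv_lt_0_compat; auto.
      * rewrite rsum_0. rewrite (rsum_ext _ _ (fun j => (/ A2) * theta Gam s2 g2 j)).
        2:{ intros; unfold Rdiv; ring. }
        rewrite rsum_scal, eA2. field_simplify; lra.
      * right; field; lra.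
    + intros t0 t1 t2 E HF'.
      eapply Rle_trans.
      { apply (kkt M N PB Gam s2 Emax eta h1 g1 g2 hga hth u u lam mu); try lra; try (unfold lam; lra).
        - rewrite eA1, ea. unfold lam, mu, alp. unfold fx in HF.
          apply (Rmult_le_reg_r (1+u)); [lra|].
          replace (A1 / (1 + u) * (1 + u)) with A1 by (field; lra).
          replace ((ln (1 + u) - u / (1 + u) + a * (A2 / (Nr * (1 + u)))) * (1 + u))
            with ((1+u) * ln (1+u) - u + c) by (rewrite ec'; field; lra). lra.
        - rewrite eA2, eNr. unfold mu. right; field; lra.
        - exact HF'. }
      right. unfold P4obj. rewrite (rsum_ext _ _ (fun _ => 0)) by (intros; apply rate00).
        rewrite rsum_0.
        rewrite (rsum_ext _ _ (fun j => (/A2 * log2 (1 + u)) * theta Gam s2 g2 j)).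
        2:{ intros j Hj. unfold Rdiv at 2. rewrite (rate_eval _ _ (/A2) u); auto.
            ring. left; apply Rinv_0_lt_compat; auto. unfold u. field. lra. }
        rewrite rsum_scal, eA2. unfold lam, mu, alp, log2, u.
        assert (0 < A2*Emax) by (apply Rmult_lt_0_compat; lra). field. repeat split; lra.
Qed.
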